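(* Let $I\subseteq\mathbb{Z}$ be an infinite interval, let $(\underline{n},\underline{c})$ be a type of level $l$, and let $\lambda\in\Lambda_{I;\underline{n},\underline{c}}$. Let $J\subset I$ be a finite subinterval such that $|J_+|\geq 2\max(\underline{n})$ and $\lambda_{ij}=c_i$ for all $1\leq i\leq l$ and all $j\in I_+\setminus J_+$. Let $\lambda_J\in\Lambda_{J;\underline{n},\underline{c}}$ be the submatrix $(\lambda_{ij})_{1\leq i\leq l,\,j\in J_+}$ and $\kappa_J:=\kappa_{J;\underline{n},\underline{c}}$. For $j\in J_+$ let $k_j$ (resp. $l_j$) be the number of entries equal to $1$ in column $j$ of $\kappa_J$ (resp. of $\lambda_J$). Then the natural number $$\operatorname{def}(\lambda):=\tfrac12\sum_{j\in J_+}(k_j^2-l_j^2)$$ is independent of the particular choice of such $J$.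
   Context: For an interval $I\subseteq\mathbb{Z}$ put $I_+:=I\cup(I+1)$. A type of level $l$ is a pair $(\underline{n},\underline{c})$ with $\underline{n}=(n_1,\dots,n_l)\in\mathbb{N}^l$ and $\underline{c}=(c_1,\dots,c_l)\in\{0,1\}^l$. $\Lambda_{I;\underline{n},\underline{c}}$ is the set of $01$-matrices $\lambda=(\lambda_{ij})_{1\leq i\leq l,\,j\in I_+}$ such that, for each $i$, exactly $n_i$ of the entries $\lambda_{ij}$ ($j\in I_+$) are different from $c_i$. For a finite interval $J$, $\kappa_{J;\underline{n},\underline{c}}$ denotes the element of $\Lambda_{J;\underline{n},\underline{c}}$ in which, in every row, all entries equal to $1$ are as far to the left as possible. (Equivalently $\operatorname{def}(\lambda)=\frac12(|\kappa_J|\cdot|\kappa_J|-|\lambda_J|\cdot|\lambda_J|)$ for the weights of the corresponding basis vectors.) *)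

(* Defs.v *)
From mathcomp Require Import all_boot all_order all_algebra.
Set Implicit Arguments. Unset Strict Implicit. Unset Printing Implicit Defensive.
Import Order.TTheory GRing.Theory Num.Theory.

Local Open Scope ring_scope.

Definition inI (lo hi : option int) (j : int) : bool :=
  (if lo is Some a then a <= j else true) && (if hi is Some b then j <= b else true).

Definition infinite_interval (lo hi : option int) : bool :=
  ~~ (isSome lo && isSome hi).

Definition inIp (lo hi : option int) (j : int) : bool :=
  inI lo hi j || inI lo hi (j - 1).

(* A 01-matrix indexed by 'I_l x Z (true = 1); only entries in I_+ matter.
   lam is in Lambda_{I;n,c}: for each row i, exactly n_i entries j in I_+
   have lam i j <> c i. *)
Definition inLambda (lo hi : option int) (l : nat) (n : 'I_l -> nat)
  (c : 'I_l -> bool) (lam : 'I_l -> int -> bool) : Prop :=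
  forall i : 'I_l, exists s : seq int,
    [/\ uniq s, size s = n i &
        forall j : int, (inIp lo hi j && (lam i j != c i)) = (j \in s)].

(* The finite interval J = {a, ..., a + m - 1} (m = |J|, possibly empty);
   Jplus a m lists J_+ = J \cup (J+1) in increasing order. *)
Definition Jplus (a : int) (m : nat) : seq int :=
  if m == 0%N then [::] else [seq a + k%:Z | k <- iota 0 m.+1].

Definition J_sub_I (lo hi : option int) (a : int) (m : nat) : Prop :=
  forall k : nat, (k < m)%N -> inI lo hi (a + k%:Z).

Definition admissibleJ (lo hi : option int) (l : nat) (n : 'I_l -> nat)
  (c : 'I_l -> bool) (lam : 'I_l -> int -> bool) (a : int) (m : nat) : Prop :=
  [/\ J_sub_I lo hi a m,
      (2 * \max_(i < l) n i <= size (Jplus a m))%N &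
      forall (i : 'I_l) (j : int), inIp lo hi j -> j \notin Jplus a m ->
        lam i j = c i].

(* kappa_J: in row i, the entries equal to 1 are the leftmost ones; the
   number of 1's in row i is n_i if c_i = 0 and |J_+| - n_i if c_i = 1.
   kappaJ i p is the entry at the p-th position (0-based) of J_+. *)
Definition kappaJ (l : nat) (n : 'I_l -> nat) (c : 'I_l -> bool)
  (a : int) (m : nat) (i : 'I_l) (p : nat) : bool :=
  (p < (if c i then size (Jplus a m) - n i else n i))%N.

Definition kcol (l : nat) (n : 'I_l -> nat) (c : 'I_l -> bool)
  (a : int) (m : nat) (p : nat) : nat :=
  #|[set i : 'I_l | kappaJ n c a m i p]|.

Definition lcol (l : nat) (lam : 'I_l -> int -> bool) (j : int) : nat :=
  #|[set i : 'I_l | lam i j]|.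

Definition twice_def (l : nat) (n : 'I_l -> nat) (c : 'I_l -> bool)
  (lam : 'I_l -> int -> bool) (a : int) (m : nat) : int :=
  \sum_(p < size (Jplus a m))
    ((kcol n c a m p ^ 2)%N%:Z - (lcol lam (nth (0 : int) (Jplus a m) p) ^ 2)%N%:Z).

(* Main.v *)
Require Import Defs.
From mathcomp Require Import all_boot all_order all_algebra.
Import Order.TTheory GRing.Theory Num.Theory.
Local Open Scope ring_scope.

Definition b2z (b : bool) : int := (b : nat)%:Z.

Lemma card_setZ (T : finType) (P : pred T) :
  (#|[set x | P x]|)%:Z = \sum_x b2z (P x).
Proof.
rewrite -sum1dep_card -natz natr_sum big_mkcond /=.
by apply: eq_bigr => x _; case: (P x).
Qed.

Lemma count_iotaZ (q : pred nat) N :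
  (count q (iota 0 N))%:Z = \sum_(p < N) b2z (q p).
Proof.
rewrite -sum1_count -natz natr_sum.
have -> : iota 0 N = index_iota 0 N by rewrite /index_iota subn0.
rewrite big_mkcond big_mkord /=.
by apply: eq_bigr => x _; case: (q x).
Qed.

Lemma sqZ (T : finType) (P : pred T) :
  ((#|[set x | P x]| ^ 2)%N)%:Z = \sum_x \sum_y b2z (P x && P y).
Proof.
rewrite -natz natrX natz card_setZ expr2 mulr_suml.
apply: eq_bigr => x _; rewrite mulr_sumr; apply: eq_bigr => y _.
by case: (P x); case: (P y).
Qed.

Lemma countT (a : int) N (T : seq int) (P : pred int) :
  uniq T -> {subset T <= [seq a + k%:Z | k <- iota 0 N]} ->
  (count P T)%:Z = \sum_(p < N) b2z ((a + p%:Z \in T) && P (a + p%:Z)).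
Proof.
move=> uT sub.
set js := [seq a + k%:Z | k <- iota 0 N].
have ujs : uniq js.
  by rewrite map_inj_uniq ?iota_uniq // => x y /addrI [].
have pe : perm_eq T [seq x <- js | x \in T].
  apply: uniq_perm => //; first by rewrite filter_uniq.
  move=> x; rewrite mem_filter; have := sub x; case: (x \in T) => //= -> //.
move/permP: pe => ->.
rewrite count_filter count_map count_iotaZ.
by apply: eq_bigr => p _; rewrite /= andbC.
Qed.

Lemma Ksum r1 r2 N : (r1 <= N)%N -> (r2 <= N)%N ->
  \sum_(p < N) b2z ((p < r1)%N && (p < r2)%N) = (minn r1 r2)%:Z.
Proof.
move=> h1 h2.
have hm : (minn r1 r2 <= N)%N by rewrite geq_min h1.
transitivity (\sum_(p < N) b2z (p < minn r1 r2)%N).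
  by apply: eq_bigr => p _; rewrite leq_min.
rewrite -(count_iotaZ (fun p => p < minn r1 r2)%N) -size_filter.
have := filter_iota_ltn 0 hm; rewrite add0n => ->.
by rewrite size_iota.
Qed.
From mathcomp Require Import zify.

Lemma sum1Z N : \sum_(p < N) (1 : int) = N%:Z.
Proof. by rewrite sumr_const card_ord natz. Qed.

Lemma pairKL (N : nat) (ci cj : bool) (ni nj : nat) (x y : nat -> bool) (cnt : int) :
  (ni + nj <= N)%N ->
  \sum_(p < N) b2z (x p) = ni%:Z -> \sum_(p < N) b2z (y p) = nj%:Z ->
  \sum_(p < N) b2z (x p && y p) = cnt ->
  \sum_(p < N) b2z ((p < (if ci then N - ni else ni))%N && (p < (if cj then N - nj else nj))%N)
  - \sum_(p < N) b2z ((ci (+) x p) && (cj (+) y p))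
  = if ci == cj then (minn ni nj)%:Z - cnt else cnt.
Proof.
move=> hN hx hy hxy.
rewrite Ksum; last first.
  by case: cj; lia. by case: ci; lia.
case: ci; case: cj => /=.
- have -> : \sum_(p < N) b2z (~~ x p && ~~ y p) =
     \sum_(p < N) 1 - \sum_(p < N) b2z (x p) - \sum_(p < N) b2z (y p) + \sum_(p < N) b2z (x p && y p).
    rewrite -!sumrB -big_split; apply: eq_bigr => p _.
    by case: (x p); case: (y p).
  rewrite sum1Z hx hy hxy. lia.
- have -> : \sum_(p < N) b2z (~~ x p && y p) =
     \sum_(p < N) b2z (y p) - \sum_(p < N) b2z (x p && y p).
    rewrite -!sumrB; apply: eq_bigr => p _.
    by case: (x p); case: (y p).
  rewrite hy hxy. lia.
- have -> : \sum_(p < N) b2z (x p && ~~ y p) =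
     \sum_(p < N) b2z (x p) - \sum_(p < N) b2z (x p && y p).
    rewrite -!sumrB; apply: eq_bigr => p _.
    by case: (x p); case: (y p).
  rewrite hx hxy. lia.
- rewrite hxy. lia.
Qed.

Lemma symsum l (F : 'I_l -> 'I_l -> int) :
  (forall i j, F i j = F j i) -> (forall i, F i i = 0) ->
  \sum_i \sum_j F i j =
  \sum_(i : 'I_l) \sum_(j : 'I_l) (if (i < j)%N then F i j else 0) + \sum_(i : 'I_l) \sum_(j : 'I_l) (if (i < j)%N then F i j else 0).
Proof.
move=> Fs F0.
pose g := fun i j : 'I_l => if (i < j)%N then F i j else 0.
transitivity (\sum_i \sum_j (g i j + g j i)).
  apply: eq_bigr => i _; apply: eq_bigr => j _; rewrite /g.
  case: (ltngtP i j) => h.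
  - by rewrite addr0.
  - by rewrite add0r Fs.
  - by move/val_inj: h => ->; rewrite F0 addr0.
under eq_bigr => i _ do rewrite big_split.
rewrite big_split /=.
congr (_ + _); exact: exchange_big.
Qed.

Theorem lemma2p2 (lo hi : option int) (Hinf : infinite_interval lo hi)
  (l : nat) (n : 'I_l -> nat) (c : 'I_l -> bool) (lam : 'I_l -> int -> bool)
  (Hlam : inLambda lo hi n c lam) :
  exists d : nat, forall (a : int) (m : nat),
    admissibleJ lo hi n c lam a m ->
    twice_def n c lam a m = (2 * d)%N%:Z.
Proof.
have [T HT] := fin_all_exists Hlam.
pose cntz i j := (count (fun x => x \in T j) (T i))%:Z.
pose F i j := if c i == c j then (minn (n i) (n j))%:Z - cntz i j else cntz i j.
pose S := \sum_(i : 'I_l) \sum_(j : 'I_l) (if (i < j)%N then F i j else 0).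
exists `|S|%N.
move=> a m [HJI Hmax Hout].
have HinIp : forall p, (p < size (Jplus a m))%N -> inIp lo hi (a + p%:Z).
  move=> p; rewrite /Jplus; case: m HJI {Hmax Hout} => [|m] HJI //=.
  rewrite size_map size_iota ltnS leq_eqVlt => /orP [/eqP ->|pm].
  - rewrite /inIp; apply/orP; right.
    have -> : a + (m.+1)%:Z - 1 = a + m%:Z by lia.
    exact: HJI.
  - by rewrite /inIp (HJI p pm).
set N := size (Jplus a m) in Hmax HinIp *.
have Hjs : Jplus a m = [seq a + k%:Z | k <- iota 0 N].
  rewrite /N /Jplus; case: (m == 0%N) => //; by rewrite size_map size_iota.
have Hnmax : forall i, (2 * n i <= N)%N.
  by move=> i; apply: leq_trans Hmax; rewrite leq_mul2l (leq_bigmax i) orbT.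
have HTsub : forall i, {subset T i <= [seq a + k%:Z | k <- iota 0 N]}.
  move=> i x xT; rewrite -Hjs; apply/negPn/negP => xn.
  have [_ _ H] := HT i; move: xT; rewrite -H => /andP [xI].
  by rewrite (Hout i x xI xn) eqxx.
have Hlamp : forall i (p : 'I_N),
    lam i (nth 0 (Jplus a m) p) = c i (+) (a + p%:Z \in T i).
  move=> i p; rewrite Hjs (nth_map 0%N) ?size_iota // nth_iota // add0n.
  have [_ _ H] := HT i; rewrite -H HinIp //=.
  by case: (lam i _); case: (c i).
have Hcnt : forall i j,
    cntz i j = \sum_(p < N) b2z ((a + p%:Z \in T i) && (a + p%:Z \in T j)).
  move=> i j; have [uT _ _] := HT i; exact: (@countT a N (T i) (fun x => x \in T j) uT (HTsub i)).
have Hsz : forall i, \sum_(p < N) b2z (a + p%:Z \in T i) = (n i)%:Z.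
  move=> i; have [uT sT _] := HT i.
  have := @countT a N (T i) predT uT (HTsub i); rewrite count_predT sT => ->.
  by apply: eq_bigr => p _; rewrite andbT.
have Hsym : forall i j, cntz i j = cntz j i.
  by move=> i j; rewrite !Hcnt; apply: eq_bigr => p _; rewrite andbC.
have Hdef : twice_def n c lam a m = \sum_i \sum_j F i j.
  rewrite /twice_def -/N.
  transitivity (\sum_(p < N) \sum_(i : 'I_l) \sum_(j : 'I_l)
     (b2z (kappaJ n c a m i p && kappaJ n c a m j p)
      - b2z (lam i (nth 0 (Jplus a m) p) && lam j (nth 0 (Jplus a m) p)))).
    apply: eq_bigr => p _; rewrite /kcol /lcol !sqZ -sumrB.
    by apply: eq_bigr => i _; rewrite -sumrB.
  rewrite exchange_big; apply: eq_bigr => i _.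
  rewrite exchange_big; apply: eq_bigr => j _.
  rewrite sumrB /kappaJ -/N.
  under [X in _ - X]eq_bigr => p _ do rewrite !Hlamp.
  apply: (@pairKL N (c i) (c j) (n i) (n j) (fun p : nat => a + p%:Z \in T i) (fun p : nat => a + p%:Z \in T j) (cntz i j)).
  - by have := Hnmax i; have := Hnmax j; lia.
  - exact: Hsz.
  - exact: Hsz.
  - by rewrite Hcnt.
have HS : twice_def n c lam a m = S + S.
  rewrite Hdef; apply: symsum.
  - by move=> i j; rewrite /F eq_sym minnC Hsym.
  - move=> i; rewrite /F eqxx minnn /cntz.
    have [_ sT _] := HT i.
    by rewrite (eq_in_count (a2 := predT)) ?count_predT ?sT ?subrr.
have S0 : 0 <= S.
  apply: sumr_ge0 => i _; apply: sumr_ge0 => j _.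
  case: ifP => // _; rewrite /F.
  have [_ si _] := HT i; have [_ sj _] := HT j.
  have Hci : (count (fun x => x \in T j) (T i) <= n i)%N by rewrite -si count_size.
  have Hcj : (count (fun x => x \in T i) (T j) <= n j)%N by rewrite -sj count_size.
  have := Hsym i j; rewrite /cntz => hs.
  case: (c i == c j); rewrite /cntz; lia.
rewrite HS PoszM gez0_abs //; lia.
Qed.
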